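(* Let $(\Sigma,\mathsf{ar})$ be an at most countable binding signature with associated functors $F,F_\alpha$ and maps $a^{(n)}$. For every $n$, the commuting square formed by $F^n(!):F^{n+1}1\to F^n1$, $a^{(n)}:F^n1\to F_\alpha^n1$, $a^{(n+1)}:F^{n+1}1\to F_\alpha^{n+1}1$ and $F_\alpha^n(!):F_\alpha^{n+1}1\to F_\alpha^n1$ is a safe square.
   Context: Nominal sets over a countably infinite set $\mathcal V$ of names; $[\mathcal V]X$ the name-abstraction with classes $\langle x\rangle u$. Binding signature: symbols $\mathsf{op}\in\Sigma$ with arities finite lists $(n_1,\dots,n_k)$. $F_\alpha X=\mathcal V+\coprod_{\mathsf{op}}\prod_i[\mathcal V]^{n_i}X$, $FX=\mathcal V+\coprod_{\mathsf{op}}\prod_i(\mathcal V^{n_i}\times X)$, $q_X:FX\to F_\alpha X$ identity on $\mathcal V$ and $(x^1,\dots,x^n,u)\mapsto\langle x^1\rangle\cdots\langle x^n\rangle u$ on factors. $1=\{*\}$, $!$ the unique map to $1$; $a^{(0)}=\mathrm{id}_1$, $a^{(n+1)}=q_{F_\alpha^n1}\circ F(a^{(n)})$. For equivariant $f$: $u$ is $f$-safe if $|\mathsf{supp}(u)|=\max\{|\mathsf{supp}(v)|:v\in f^{-1}(f(u))\}$; $\mathsf{bv}_f(u)=\mathsf{supp}(u)\setminus\mathsf{supp}(f(u))$. A commuting square $p:Z\to X$, $f:X\to W$, $g:Z\to Y$, $q:Y\to W$ ($f\circ p=q\circ g$) is a safe square if for every $f$-safe $u\in X$ and $v\in Y$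 with $f(u)=q(v)$ and $\mathsf{bv}_f(u)\cap\mathsf{supp}(v)=\emptyset$ there is a $g$-safe $z\in Z$ with $p(z)=u$, $g(z)=v$. *)

(* Defs.v *)
From mathcomp Require Import all_boot.
From Stdlib Require Import ClassicalEpsilon.

Set Implicit Arguments.
Unset Strict Implicit.
Unset Printing Implicit Defensive.

(* Names: V = nat (countably infinite).  Transposition (a b) on names. *)
Definition swapn (a b c : nat) : nat :=
  if c == a then b else if c == b then a else c.

(* A set with an action of name transpositions (the permutation action
   of a nominal set, presented through transpositions as in Pitts). *)
Record pset := PSet { car :> Type; swp : nat -> nat -> car -> car }.
Arguments swp : clear implicits.

Definition supports (X : pset) (l : seq nat) (x : X) : Prop :=
  forall b c, b \notin l -> c \notin l -> swp X b c x = x.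

(* a \in supp(x): a lies in every finite support of x (least support). *)
Definition in_supp (X : pset) (x : X) (a : nat) : Prop :=
  forall l, supports l x -> a \in l.

Definition supp_size (X : pset) (x : X) (k : nat) : Prop :=
  exists l : seq nat, [/\ uniq l, (forall a, a \in l <-> in_supp x a) & size l = k].

Definition unitP : pset := @PSet unit (fun _ _ x => x).

(* Name abstraction [V]X : alpha-equivalence classes of pairs (a, x).
   (a,x) ~ (a',x') iff (a c).x = (a' c).x' for some c # (a,x,a',x'). *)
Definition alpha_cls (X : pset) (a : nat) (x : X) : nat * X -> Prop :=
  fun p => exists c, [/\ c != a, c != p.1, ~ in_supp x c, ~ in_supp p.2 c
                       & swp X a c x = swp X p.1 c p.2].

Definition abs_car (X : pset) : Type :=
  {P : nat * X -> Prop | exists a, exists x, P = alpha_cls a x}.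

Definition abs_mk (X : pset) (a : nat) (x : X) : abs_car X :=
  exist _ (alpha_cls a x) (ex_intro _ a (ex_intro _ x erefl)).

Definition abs_rep (X : pset) (t : abs_car X) : nat * X :=
  let s := constructive_indefinite_description _ (proj2_sig t) in
  let s2 := constructive_indefinite_description _ (proj2_sig s) in
  (proj1_sig s, proj1_sig s2).

(* (b c).<a>x = <(b c)a>((b c).x) *)
Definition absP (X : pset) : pset :=
  @PSet (abs_car X)
    (fun b c t => abs_mk (swapn b c (abs_rep t).1) (swp X b c (abs_rep t).2)).

Definition abs_map (X Y : pset) (f : X -> Y) (t : absP X) : absP Y :=
  abs_mk (abs_rep t).1 (f (abs_rep t).2).

Fixpoint absn (k : nat) (X : pset) : pset :=
  match k with 0 => X | S k' => absP (absn k' X) end.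

Fixpoint absn_map (k : nat) (X Y : pset) (f : X -> Y) : absn k X -> absn k Y :=
  match k return absn k X -> absn k Y with
  | 0 => f
  | S k' => abs_map (@absn_map k' X Y f)
  end.

Fixpoint qn (X : pset) (k : nat) : k.-tuple nat -> X -> absn k X :=
  match k return k.-tuple nat -> X -> absn k X with
  | 0 => fun _ x => x
  | S k' => fun t x => abs_mk (thead t) (@qn X k' (behead_tuple t) x)
  end.

(* Binding signature: operation symbols Op with arities ar op = (n_1..n_k). *)
Section Functors.
Variables (Op : Type) (ar : Op -> seq nat).

(* F X = V + coprod_op prod_i (V^{n_i} x X) *)
Definition F_car (X : pset) : Type :=
  (nat + {op : Op & forall i : 'I_(size (ar op)),
                     ((nth 0 (ar op) i).-tuple nat * X)%type})%type.

Definition F (X : pset) : pset :=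
  @PSet (F_car X) (fun b c u =>
    match u with
    | inl a => inl (swapn b c a)
    | inr (existT op h) =>
        inr (existT _ op (fun i => (map_tuple (swapn b c) (h i).1, swp X b c (h i).2)))
    end).

Definition Fmap (X Y : pset) (f : X -> Y) (u : F X) : F Y :=
  match u with
  | inl a => inl a
  | inr (existT op h) => inr (existT _ op (fun i => ((h i).1, f (h i).2)))
  end.

(* F_alpha X = V + coprod_op prod_i [V]^{n_i} X *)
Definition Fa_car (X : pset) : Type :=
  (nat + {op : Op & forall i : 'I_(size (ar op)), absn (nth 0 (ar op) i) X})%type.

Definition Fa (X : pset) : pset :=
  @PSet (Fa_car X) (fun b c u =>
    match u with
    | inl a => inl (swapn b c a)
    | inr (existT op h) => inr (existT _ op (fun i => swp _ b c (h i)))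
    end).

Definition Famap (X Y : pset) (f : X -> Y) (u : Fa X) : Fa Y :=
  match u with
  | inl a => inl a
  | inr (existT op h) => inr (existT _ op (fun i => @absn_map _ X Y f (h i)))
  end.

Definition q (X : pset) (u : F X) : Fa X :=
  match u with
  | inl a => inl a
  | inr (existT op h) => inr (existT _ op (fun i => qn (h i).1 (h i).2))
  end.

Fixpoint Fn (n : nat) : pset :=
  match n with 0 => unitP | S m => F (Fn m) end.
Fixpoint Fan (n : nat) : pset :=
  match n with 0 => unitP | S m => Fa (Fan m) end.

Fixpoint Fbang (n : nat) : Fn n.+1 -> Fn n :=
  match n return Fn n.+1 -> Fn n with
  | 0 => fun _ => tt
  | S m => Fmap (@Fbang m)
  end.
Fixpoint Fabang (n : nat) : Fan n.+1 -> Fan n :=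
  match n return Fan n.+1 -> Fan n with
  | 0 => fun _ => tt
  | S m => Famap (@Fabang m)
  end.

Fixpoint amap (n : nat) : Fn n -> Fan n :=
  match n return Fn n -> Fan n with
  | 0 => fun x => x
  | S m => fun u => q (Fmap (@amap m) u)
  end.
End Functors.
Arguments Fbang {Op} ar n _.
Arguments Fabang {Op} ar n _.
Arguments amap {Op} ar n _.
Arguments Fn {Op} ar n.
Arguments Fan {Op} ar n.

Definition safe (X W : pset) (f : X -> W) (u : X) : Prop :=
  exists k, supp_size u k /\
    forall v k', f v = f u -> supp_size v k' -> k' <= k.

(* Commuting square p : Z -> X, f : X -> W, g : Z -> Y, q : Y -> W which
   is safe. bv_f(u) = supp u \ supp (f u). *)
Definition safe_square (Z X Y W : pset)
    (p : Z -> X) (f : X -> W) (g : Z -> Y) (qq : Y -> W) : Prop :=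
  (forall z, f (p z) = qq (g z)) /\
  forall (u : X) (v : Y),
    safe f u -> f u = qq v ->
    (forall a, in_supp u a -> ~ in_supp (f u) a -> ~ in_supp v a) ->
    exists z : Z, [/\ safe g z, p z = u & g z = v].

(* Main.v *)
Require Import Defs.
From mathcomp Require Import all_boot.
From Stdlib Require Import ClassicalEpsilon ProofIrrelevance FunctionalExtensionality PropExtensionality Eqdep.
Set Implicit Arguments.
Unset Strict Implicit.
Unset Printing Implicit Defensive.

Ltac sw := rewrite /swapn; repeat (repeat rewrite eqxx /=; match goal with |- context [?x == ?y] => is_var x; is_var y; case: (eqVneq x y) => [?|?]; [subst|] end); repeat rewrite eqxx /=;
 try congruence; try by match goal with H: is_true (?a != ?a) |- _ => rewrite eqxx in H end.

Lemma swapnL b c : swapn b c b = c.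
Proof. by rewrite /swapn eqxx. Qed.
Lemma swapnR b c : swapn b c c = b.
Proof. rewrite /swapn eqxx; by case: eqP. Qed.
Lemma swapnO b c a : a != b -> a != c -> swapn b c a = a.
Proof. by rewrite /swapn => /negbTE -> /negbTE ->. Qed.
Lemma swapnK b c a : swapn b c (swapn b c a) = a.
Proof. sw. Qed.
Lemma swapn_id a c : swapn a a c = c.
Proof. sw. Qed.
Lemma swapnC b c a : swapn b c a = swapn c b a.
Proof. sw. Qed.
Lemma swapn_inj b c : injective (swapn b c).
Proof. by move=> x y /(f_equal (swapn b c)); rewrite !swapnK. Qed.
Lemma swapn_conj a b c d e :
  swapn a b (swapn c d e) = swapn (swapn a b c) (swapn a b d) (swapn a b e).
Proof. sw. Qed.
Lemma mem_map_swapn b c a l : (a \in map (swapn b c) l) = (swapn b c a \in l).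
Proof. by rewrite -{1}(swapnK b c a) mem_map //; apply: swapn_inj. Qed.

Definition nom (X : pset) : Prop :=
  [/\ (forall b c (x : X), swp X b c (swp X b c x) = x),
      (forall a (x : X), swp X a a x = x),
      (forall b c (x : X), swp X b c x = swp X c b x),
      (forall a b c d (x : X),
          swp X a b (swp X c d x) = swp X (swapn a b c) (swapn a b d) (swp X a b x)) &
      (forall x : X, exists l, supports l x)].

Lemma swpK (X : pset) (HX : nom X) b c (x : X) : swp X b c (swp X b c x) = x.
Proof. by case: HX. Qed.
Lemma swp_id (X : pset) (HX : nom X) a (x : X) : swp X a a x = x.
Proof. by case: HX. Qed.
Lemma swpC (X : pset) (HX : nom X) b c (x : X) : swp X b c x = swp X c b x.
Proof. by case: HX. Qed.
Lemma swp_conj (X : pset) (HX : nom X) a b c d (x : X) :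
  swp X a b (swp X c d x) = swp X (swapn a b c) (swapn a b d) (swp X a b x).
Proof. by case: HX. Qed.
Lemma has_supp (X : pset) (HX : nom X) (x : X) : exists l, supports l x.
Proof. by case: HX. Qed.

Definition fresh (l : seq nat) := (foldr maxn 0 l).+1.
Lemma fresh_notin l : fresh l \notin l.
Proof.
have H : forall a, a \in l -> a <= foldr maxn 0 l.
  elim: l => //= b l IH a; rewrite inE => /orP [/eqP ->|/IH]; first exact: leq_maxl.
  move=> h; apply: leq_trans h (leq_maxr _ _).
by apply/negP => /H; rewrite /fresh ltnn.
Qed.
Lemma fresh_notin_cat l1 l2 : fresh (l1 ++ l2) \notin l1 /\ fresh (l1 ++ l2) \notin l2.
Proof. by have := fresh_notin (l1 ++ l2); rewrite mem_cat negb_or => /andP. Qed.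

Lemma supports_sub (X : pset) l l' (x : X) : supports l x -> {subset l <= l'} -> supports l' x.
Proof. move=> H sub b c hb hc; apply: H; apply/negP => /sub; by apply/negP. Qed.

Lemma swp3 (X : pset) (HX : nom X) (b c d : nat) (x : X) : c != b -> d != b -> d != c ->
  swp X b d (swp X c d (swp X b d x)) = swp X b c x.
Proof.
move=> cb db dc; rewrite swp_conj // swapnR swpK //.
have cd : c != d by rewrite eq_sym.
by rewrite swapnO // swpC.
Qed.

Lemma supports_cap (X : pset) (HX : nom X) l1 l2 (x : X) :
  supports l1 x -> supports l2 x -> supports [seq a <- l1 | a \in l2] x.
Proof.
move=> H1 H2 b c hb hc.
case: (eqVneq b c) => [<-|bc]; first exact: swp_id.
set d := fresh (l1 ++ l2 ++ [:: b; c]).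
have := fresh_notin (l1 ++ l2 ++ [:: b; c]); rewrite -/d !mem_cat !inE !negb_or.
case/and3P => d1 d2 /andP [db dc].
have fixe : forall e, e \notin [seq a <- l1 | a \in l2] -> swp X e d x = x.
  move=> e; rewrite mem_filter negb_and => /orP [e2|e1]; first exact: H2.
  exact: H1.
by rewrite -(swp3 HX x _ db dc) 1?eq_sym // !fixe.
Qed.

Definition decP (P : Prop) : bool := if excluded_middle_informative P then true else false.
Lemma decPE P : decP P <-> P.
Proof. by rewrite /decP; case: excluded_middle_informative. Qed.

Lemma supports_rem (X : pset) (HX : nom X) (x : X) (s : seq nat) : forall l : seq nat,
  (forall a, a \in s -> ~ in_supp x a) -> supports l x ->
  supports [seq a <- l | a \notin s] x.
Proof.
elim: s => [|a s IH] l Hs Hl.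
  by refine (supports_sub Hl _) => y yl; rewrite mem_filter yl.
have : ~ in_supp x a by apply: Hs; rewrite inE eqxx.
move/Classical_Pred_Type.not_all_ex_not => [l' Hl'].
have [Hl'1 Hl'2] := Classical_Prop.imply_to_and _ _ Hl'.
have := supports_cap HX (IH l (fun b hb => Hs b (@mem_behead _ (a :: s) b hb)) Hl) Hl'1.
move/supports_sub => H; apply: H => y; rewrite !mem_filter inE negb_or => /andP [y1 /andP [y2 y3]].
rewrite y2 y3 !andbT; apply/negP => /eqP ?; subst.
by move/negP: Hl'2.
Qed.

Lemma supp_exists (X : pset) (HX : nom X) (x : X) :
  exists l, [/\ uniq l, (forall a, a \in l <-> in_supp x a) & supports l x].
Proof.
have [l0 H0] := has_supp HX x.
set s := [seq a <- l0 | ~~ decP (in_supp x a)].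
have Hs : forall a, a \in s -> ~ in_supp x a.
  by move=> a; rewrite mem_filter => /andP [/negP h _] /decPE.
have Hsupp := supports_rem HX Hs H0.
exists (undup [seq a <- l0 | a \notin s]); split; first exact: undup_uniq.
- move=> a; rewrite mem_undup mem_filter mem_filter negb_and negbK; split.
    case/andP => /orP [/decPE //|/negP] h1 h2 //.
  move=> h; rewrite (h l0 H0) andbT; apply/orP; left; exact/decPE.
- by refine (supports_sub Hsupp _) => y; rewrite mem_undup.
Qed.

Definition Sl (X : pset) (x : X) : seq nat :=
  match excluded_middle_informative
          (exists l, uniq l /\ (forall a, a \in l <-> in_supp x a)) with
  | left H => proj1_sig (constructive_indefinite_description _ H)
  | right _ => [::]
  end.

Lemma SP (X : pset) (HX : nom X) (x : X) : uniq (Sl x) /\ (forall a, a \in Sl x <-> in_supp x a).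
Proof.
rewrite /Sl; case: excluded_middle_informative => [H|H].
  by case: (constructive_indefinite_description _ H).
exfalso; apply: H; have [l [? ? ?]] := supp_exists HX x; by exists l.
Qed.
Lemma S_uniq (X : pset) (HX : nom X) (x : X) : uniq (Sl x).
Proof. by case: (SP HX x). Qed.
Lemma memS (X : pset) (HX : nom X) (x : X) a : a \in Sl x <-> in_supp x a.
Proof. by case: (SP HX x). Qed.
Lemma S_supports (X : pset) (HX : nom X) (x : X) : supports (Sl x) x.
Proof.
have [l [_ H1 H2]] := supp_exists HX x; refine (supports_sub H2 _) => a.
by move/H1/(memS HX).
Qed.
Lemma swp_fix (X : pset) (HX : nom X) b c (x : X) : ~ in_supp x b -> ~ in_supp x c -> swp X b c x = x.
Proof.
move=> hb hc; apply: (S_supports HX); apply/negP => /(memS HX); by [apply: hb|apply: hc].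
Qed.

Lemma supports_swp (X : pset) (HX : nom X) l b c (x : X) :
  supports l x -> supports (map (swapn b c) l) (swp X b c x).
Proof.
move=> H d e hd he; rewrite !mem_map_swapn in hd he.
rewrite -{1}(swapnK b c d) -{1}(swapnK b c e) -swp_conj //; by rewrite H.
Qed.

Lemma in_supp_swp (X : pset) (HX : nom X) b c (x : X) a :
  in_supp (swp X b c x) a <-> in_supp x (swapn b c a).
Proof.
split=> H l Hl.
- by rewrite -mem_map_swapn; apply: H; apply: supports_swp.
- have := @supports_swp _ HX _ b c _ Hl; rewrite swpK // => /H; rewrite mem_map_swapn swapnK //.
Qed.

Lemma fix_fresh (X : pset) (HX : nom X) d e (y : X) :
  swp X d e y = y -> ~ in_supp y e -> ~ in_supp y d.
Proof. by move=> E He Hd; apply: He; rewrite -E in_supp_swp // swapnR. Qed.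

Definition eqv (X Y : pset) (f : X -> Y) := forall b c x, f (swp X b c x) = swp Y b c (f x).

Lemma eqv_supp (X Y : pset) (HX : nom X) (f : X -> Y) (x : X) a :
  eqv f -> in_supp (f x) a -> in_supp x a.
Proof.
move=> Hf H; apply/(memS HX); apply: H => b c hb hc.
by rewrite -Hf (S_supports HX).
Qed.

Lemma not_in_supp (X : pset) (x : X) a l : supports l x -> a \notin l -> ~ in_supp x a.
Proof. by move=> H1 H2 H3; move: (H3 _ H1); apply/negP. Qed.


Definition R (X : pset) (a : nat) (x : X) (b : nat) (y : X) := alpha_cls a x (b, y).

Lemma fresh4 (X : pset) (HX : nom X) (x y : X) (l : seq nat) :
  exists c, [/\ c \notin l, ~ in_supp x c & ~ in_supp y c].
Proof.
set c := fresh (l ++ Sl x ++ Sl y); have := fresh_notin (l ++ Sl x ++ Sl y).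
rewrite -/c !mem_cat !negb_or => /and3P [h1 h2 h3]; exists c; split=> //.
- by move/(memS HX); apply/negP.
- by move/(memS HX); apply/negP.
Qed.

Lemma swp_move (X : pset) (HX : nom X) (a c0 c : nat) (x : X) :
  c0 != a -> c != a -> ~ in_supp x c0 -> ~ in_supp x c ->
  swp X c0 c (swp X a c0 x) = swp X a c x.
Proof.
move=> h1 h2 h3 h4; rewrite swp_conj // swapnL swapnO 1?eq_sym //.
  by rewrite (swp_fix HX h3 h4).
Qed.

Lemma R_all (X : pset) (HX : nom X) a (x : X) b y : R a x b y ->
  forall c, c != a -> c != b -> ~ in_supp x c -> ~ in_supp y c -> swp X a c x = swp X b c y.
Proof.
case=> c0 /= [h1 h2 h3 h4 E] c ca cb cx cy.
case: (eqVneq c c0) => [->//|cc0].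
by rewrite -(swp_move HX h1 ca h3 cx) -(swp_move HX h2 cb h4 cy) E.
Qed.

Lemma R_intro (X : pset) (HX : nom X) a (x : X) b y :
  (forall c, c != a -> c != b -> ~ in_supp x c -> ~ in_supp y c -> swp X a c x = swp X b c y) ->
  R a x b y.
Proof.
move=> H; have [c [hl hx hy]] := fresh4 HX x y [:: a; b].
move: hl; rewrite !inE negb_or => /andP [ca cb].
exists c; split=> //; exact: H.
Qed.

Lemma R_refl (X : pset) (HX : nom X) a (x : X) : R a x a x.
Proof. exact: R_intro. Qed.

Lemma R_sym (X : pset) (HX : nom X) a (x : X) b y : R a x b y -> R b y a x.
Proof. move=> H; apply: (R_intro HX) => c h1 h2 h3 h4; symmetry; exact: (R_all HX H). Qed.

Lemma fresh5 (X : pset) (HX : nom X) (x y w : X) (l : seq nat) :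
  exists c, [/\ c \notin l, ~ in_supp x c, ~ in_supp y c & ~ in_supp w c].
Proof.
set c := fresh (l ++ Sl x ++ Sl y ++ Sl w); have := fresh_notin (l ++ Sl x ++ Sl y ++ Sl w).
rewrite -/c !mem_cat !negb_or => /and4P [h1 h2 h3 h4]; exists c; split=> //.
- by move/(memS HX); apply/negP.
- by move/(memS HX); apply/negP.
- by move/(memS HX); apply/negP.
Qed.

Lemma R_trans (X : pset) (HX : nom X) a (x : X) b y d w : R a x b y -> R b y d w -> R a x d w.
Proof.
move=> H1 H2.
have [c [hl hx hy hw]] := fresh5 HX x y w [:: a; b; d].
move: hl; rewrite !inE !negb_or => /and3P [ca cb cd].
exists c; split=> //=.
by rewrite (R_all HX H1) // (R_all HX H2).
Qed.

Lemma exist_eq (A : Type) (Q : A -> Prop) (P1 P2 : A) (h1 : Q P1) (h2 : Q P2) :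
  P1 = P2 -> exist Q P1 h1 = exist Q P2 h2.
Proof. move=> E; subst; f_equal; apply: proof_irrelevance. Qed.

Lemma abs_eq (X : pset) (HX : nom X) a (x : X) b y :
  abs_mk a x = abs_mk b y <-> R a x b y.
Proof.
split.
- move/(f_equal (@proj1_sig _ _)) => /= E; rewrite /R E; exact: R_refl.
- move=> H; apply: exist_eq; apply: functional_extensionality => [[p1 p2]].
  apply: propositional_extensionality; split.
  + move=> H'; exact: (R_trans HX (R_sym HX H) H').
  + move=> H'; exact: (R_trans HX H H').
Qed.

Lemma abs_inj (X : pset) (HX : nom X) a (x y : X) : abs_mk a x = abs_mk a y -> x = y.
Proof.
move/(abs_eq HX) => H.
have [c [hl hx hy]] := fresh4 HX x y [:: a].
move: hl; rewrite inE => ca.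
have := R_all HX H ca ca hx hy => /(f_equal (swp X a c)); by rewrite !swpK.
Qed.

Lemma abs_rename (X : pset) (HX : nom X) a b (x : X) :
  ~ in_supp x b -> abs_mk a x = abs_mk b (swp X a b x).
Proof.
move=> hb; case: (eqVneq a b) => [<-|ab]; first by rewrite swp_id.
apply/(abs_eq HX); apply: (R_intro HX) => c ca cb cx cy.
have ac : a != c by rewrite eq_sym.
by rewrite swp_conj // swapnL swapnO // (swp_fix HX hb cx).
Qed.

Lemma rep_spec (X : pset) (t : abs_car X) : t = abs_mk (abs_rep t).1 (abs_rep t).2.
Proof.
rewrite /abs_rep /abs_mk /=.
case: (constructive_indefinite_description _ _) => a /= Ha.
case: (constructive_indefinite_description _ _) => x /= Hx.
case: t Ha Hx => P HP /= Ha Hx; exact: exist_eq.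
Qed.

Lemma abs_ind (X : pset) (P : abs_car X -> Prop) :
  (forall a x, P (abs_mk a x)) -> forall t, P t.
Proof. move=> H t; rewrite (rep_spec t); exact: H. Qed.

Lemma R_swp (X : pset) (HX : nom X) a (x : X) a' x' b c :
  R a x a' x' -> R (swapn b c a) (swp X b c x) (swapn b c a') (swp X b c x').
Proof.
case=> d /= [h1 h2 h3 h4 E]; exists (swapn b c d); split => /=.
- by rewrite (inj_eq (@swapn_inj b c)).
- by rewrite (inj_eq (@swapn_inj b c)).
- by rewrite in_supp_swp // swapnK.
- by rewrite in_supp_swp // swapnK.
- by rewrite -!swp_conj // E.
Qed.

Lemma swp_abs (X : pset) (HX : nom X) b c a (x : X) :
  swp (absP X) b c (abs_mk a x) = abs_mk (swapn b c a) (swp X b c x).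
Proof.
rewrite /= /abs_mk; apply: exist_eq.
have : R (abs_rep (abs_mk a x)).1 (abs_rep (abs_mk a x)).2 a x.
  apply/(abs_eq HX); by rewrite -rep_spec.
move/(R_swp HX b c)/(abs_eq HX) => E.
by move: (f_equal (@proj1_sig _ _) E).
Qed.

Lemma supports_abs (X : pset) (HX : nom X) a (x : X) :
  @supports (absP X) [seq d <- Sl x | d != a] (abs_mk a x).
Proof.
move=> b c; rewrite !mem_filter !negb_and !negbK => hb hc.
rewrite swp_abs //.
case: (eqVneq b c) => [<-|bc]; first by rewrite swapn_id swp_id.
have nS : forall e, e != a -> e \notin Sl x -> ~ in_supp x e.
  by move=> e _ h /(memS HX) h'; move/negP: h.
case: (eqVneq b a) => [Eb|ba]; case: (eqVneq c a) => [Ec|ca].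
- by move: bc; rewrite Eb Ec eqxx.
- subst b; rewrite swapnL; symmetry; apply: abs_rename => //.
  by apply: nS => //; case/orP: hc => // /eqP; move/eqP: ca.
- subst c; rewrite swapnR swpC //; symmetry; apply: abs_rename => //.
  by apply: nS => //; case/orP: hb => // /eqP; move/eqP: ba.
- rewrite swapnO 1?eq_sym // swp_fix //.
  + by apply: nS => //; move: hb; rewrite (negbTE ba).
  + by apply: nS => //; move: hc; rewrite (negbTE ca).
Qed.

Lemma supp_abs (X : pset) (HX : nom X) a (x : X) d :
  @in_supp (absP X) (abs_mk a x) d <-> d != a /\ in_supp x d.
Proof.
split.
- move=> H; have := H _ (@supports_abs _ HX a x); rewrite mem_filter => /andP [-> /(memS HX)] //.
- case=> da dx l Hl.
  case Hdl: (d \in l); first by [].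
  exfalso.
  have [e [el ex _]] := fresh4 HX x x (d :: a :: l).
  move: el; rewrite !inE !negb_or => /and3P [ed ea el].
  have E : swp (absP X) d e (abs_mk a x) = abs_mk a x by apply: Hl; rewrite ?Hdl.
  rewrite swp_abs // swapnO 1?eq_sym // in E.
  move/(abs_inj HX): E => E.
  exact: (fix_fresh HX E ex dx).
Qed.

Lemma nom_absP (X : pset) (HX : nom X) : nom (absP X).
Proof.
split.
- move=> b c; elim/abs_ind => a x; by rewrite !swp_abs // swapnK swpK.
- move=> d; elim/abs_ind => a x; by rewrite !swp_abs // swapn_id swp_id.
- move=> b c; elim/abs_ind => a x; by rewrite !swp_abs // swapnC swpC.
- move=> a b c d; elim/abs_ind => e x; by rewrite !swp_abs // swapn_conj swp_conj.
- elim/abs_ind => a x; eexists; exact: supports_abs.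
Qed.

Lemma abs_map_mk (X Y : pset) (HX : nom X) (HY : nom Y) (f : X -> Y) a (x : X) :
  eqv f -> abs_map f (abs_mk a x) = abs_mk a (f x).
Proof.
move=> Hf; rewrite /abs_map.
set a' := (abs_rep _).1; set x' := (abs_rep _).2.
have H : R a' x' a x by apply/(abs_eq HX); rewrite /a' /x' -rep_spec.
apply/(abs_eq HY).
have [c [hl hx hy]] := fresh4 HX x' x [:: a'; a].
move: hl; rewrite !inE !negb_or => /andP [ca' ca].
exists c; split => //=.
- by move/(eqv_supp HX Hf).
- by move/(eqv_supp HX Hf).
- by rewrite -!Hf (R_all HX H).
Qed.

Lemma eqv_abs_map (X Y : pset) (HX : nom X) (HY : nom Y) (f : X -> Y) :
  eqv f -> eqv (abs_map f).
Proof.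
move=> Hf b c; elim/abs_ind => a x.
by rewrite swp_abs // !abs_map_mk // swp_abs // Hf.
Qed.

Lemma nom_absn k (X : pset) : nom X -> nom (absn k X).
Proof. by elim: k => //= k IH HX; apply: nom_absP; apply: IH. Qed.

Lemma eqv_absn_map k (X Y : pset) (HX : nom X) (HY : nom Y) (f : X -> Y) :
  eqv f -> eqv (@absn_map k X Y f).
Proof.
elim: k => //= k IH Hf; apply: eqv_abs_map; try apply: nom_absn => //.
exact: IH.
Qed.

Lemma qnS (X : pset) k (t : k.+1.-tuple nat) (y : X) :
  qn t y = abs_mk (thead t) (qn (behead_tuple t) y).
Proof. by []. Qed.

Lemma supp_qn (X : pset) (HX : nom X) k (t : k.-tuple nat) (y : X) d :
  in_supp (qn t y) d <-> d \notin t /\ in_supp y d.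
Proof.
elim: k t => [|k IH] t.
  by rewrite tuple0 /=; split=> [h|[]].
case/tupleP: t => h t; rewrite qnS theadE.
have -> : behead_tuple [tuple of h :: t] = t by apply: val_inj.
rewrite (supp_abs (nom_absn k HX)) IH inE negb_or; split.
- by case=> h1 [h2 h3]; rewrite h1 h2.
- by case=> /andP [h1 h2] h3.
Qed.

Lemma swp_qn (X : pset) (HX : nom X) k (t : k.-tuple nat) (y : X) b c :
  swp (absn k X) b c (qn t y) = qn (map_tuple (swapn b c) t) (swp X b c y).
Proof.
elim: k t => [|k IH] t; first by rewrite tuple0.
case/tupleP: t => h t; rewrite !qnS (@swp_abs (absn k X) (nom_absn k HX)).
rewrite IH; congr abs_mk.
congr qn; by apply: val_inj.
Qed.

Lemma absn_map_qn (X Y : pset) (HX : nom X) (HY : nom Y) (f : X -> Y) (Hf : eqv f)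
  k (t : k.-tuple nat) (y : X) : absn_map f (qn t y) = qn t (f y).
Proof.
elim: k t => [|k IH] t //=.
rewrite abs_map_mk; try apply: nom_absn => //; last exact: eqv_absn_map.
by rewrite IH.
Qed.


Lemma mem_flat K (f : 'I_K -> seq nat) d :
  d \in flatten [seq f i | i <- enum 'I_K] <-> exists i, d \in f i.
Proof.
split; first by case/flatten_mapP => i _ h; exists i.
by case=> i h; apply/flatten_mapP; exists i; rewrite ?mem_enum.
Qed.

Lemma mt_K k b c (t : k.-tuple nat) : map_tuple (swapn b c) (map_tuple (swapn b c) t) = t.
Proof. apply: val_inj => /=; rewrite -map_comp; apply: map_id_in => x _ /=; exact: swapnK. Qed.
Lemma mt_id k a (t : k.-tuple nat) : map_tuple (swapn a a) t = t.
Proof. apply: val_inj => /=; apply: map_id_in => x _ /=; exact: swapn_id. Qed.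
Lemma mt_C k b c (t : k.-tuple nat) : map_tuple (swapn b c) t = map_tuple (swapn c b) t.
Proof. apply: val_inj => /=; apply: eq_map => x; exact: swapnC. Qed.
Lemma mt_conj k a b c d (t : k.-tuple nat) :
  map_tuple (swapn a b) (map_tuple (swapn c d) t) =
  map_tuple (swapn (swapn a b c) (swapn a b d)) (map_tuple (swapn a b) t).
Proof. apply: val_inj => /=; rewrite -!map_comp; apply: eq_map => x /=; exact: swapn_conj. Qed.
Lemma mt_fix k b c (t : k.-tuple nat) : b \notin t -> c \notin t -> map_tuple (swapn b c) t = t.
Proof.
move=> hb hc; apply: val_inj => /=; apply: map_id_in => x xt; apply: swapnO.
- by apply/negP => /eqP E; move: hb; rewrite -E xt.
- by apply/negP => /eqP E; move: hc; rewrite -E xt.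
Qed.

Lemma existT_inj (A : Type) (P : A -> Type) (a : A) (x y : P a) :
  existT P a x = existT P a y -> x = y.
Proof. exact: inj_pair2. Qed.

Lemma inr_inj (A : Type) (B : Type) (x y : B) : @inr A B x = inr y -> x = y.
Proof. by case. Qed.

Lemma nom_unit : nom unitP.
Proof. by split=> //; move=> x; exists [::] => b c _ _. Qed.

Definition lF (Op : Type) (ar : Op -> seq nat) (X : pset) op
   (h : forall i : 'I_(size (ar op)), ((nth 0 (ar op) i).-tuple nat * X)%type) : seq nat :=
  flatten [seq val (h i).1 ++ Sl (h i).2 | i <- enum 'I_(size (ar op))].

Lemma supports_F (Op : Type) (ar : Op -> seq nat) (X : pset) (HX : nom X) op h :
  @supports (F ar X) (lF h) (inr (existT _ op h)).
Proof.
move=> b c hb hc /=; congr inr; congr existT; apply: functional_extensionality_dep => i.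
have hi : forall d, d \notin lF h -> d \notin val (h i).1 ++ Sl (h i).2.
  move=> d hd; apply/negP => hh; move/negP: hd; apply; apply/mem_flat; by exists i.
move: (hi _ hb) (hi _ hc); rewrite !mem_cat !negb_or => /andP [b1 b2] /andP [c1 c2].
case: (h i) b1 b2 c1 c2 => t x /= b1 b2 c1 c2; rewrite mt_fix // swp_fix //.
- by move/(memS HX); apply/negP.
- by move/(memS HX); apply/negP.
Qed.

Lemma nom_F (Op : Type) (ar : Op -> seq nat) (X : pset) (HX : nom X) : nom (F ar X).
Proof.
split.
- move=> b c [a|[op h]] /=; first by rewrite swapnK.
  congr inr; congr existT; apply: functional_extensionality_dep => i /=.
  by rewrite mt_K swpK //; case: (h i).
- move=> a [e|[op h]] /=; first by rewrite swapn_id.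
  congr inr; congr existT; apply: functional_extensionality_dep => i /=.
  by rewrite mt_id swp_id //; case: (h i).
- move=> b c [e|[op h]] /=; first by rewrite swapnC.
  congr inr; congr existT; apply: functional_extensionality_dep => i /=.
  by rewrite mt_C swpC.
- move=> a b c d [e|[op h]] /=; first by rewrite swapn_conj.
  congr inr; congr existT; apply: functional_extensionality_dep => i /=.
  by rewrite mt_conj swp_conj.
- case=> [a|[op h]]; last by eexists; apply: supports_F.
  exists [:: a] => b c; rewrite !inE => hb hc /=; by rewrite swapnO // eq_sym.
Qed.

Definition lFa (Op : Type) (ar : Op -> seq nat) (X : pset) op
   (h : forall i : 'I_(size (ar op)), absn (nth 0 (ar op) i) X) : seq nat :=
  flatten [seq Sl (h i) | i <- enum 'I_(size (ar op))].

Lemma supports_Fa (Op : Type) (ar : Op -> seq nat) (X : pset) (HX : nom X) op h :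
  @supports (Fa ar X) (lFa h) (inr (existT _ op h)).
Proof.
move=> b c hb hc /=; congr inr; congr existT; apply: functional_extensionality_dep => i.
have hi : forall d, d \notin lFa h -> d \notin Sl (h i).
  move=> d hd; apply/negP => hh; move/negP: hd; apply; apply/mem_flat; by exists i.
have HXi := nom_absn (nth 0 (ar op) i) HX.
move: (hi _ hb) (hi _ hc) => b2 c2; rewrite swp_fix //.
- by move/(memS HXi); apply/negP.
- by move/(memS HXi); apply/negP.
Qed.

Lemma nom_Fa (Op : Type) (ar : Op -> seq nat) (X : pset) (HX : nom X) : nom (Fa ar X).
Proof.
split.
- move=> b c [a|[op h]] /=; first by rewrite swapnK.
  congr inr; congr existT; apply: functional_extensionality_dep => i /=.
  by rewrite swpK //; apply: nom_absn.
- move=> a [e|[op h]] /=; first by rewrite swapn_id.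
  congr inr; congr existT; apply: functional_extensionality_dep => i /=.
  by rewrite swp_id //; apply: nom_absn.
- move=> b c [e|[op h]] /=; first by rewrite swapnC.
  congr inr; congr existT; apply: functional_extensionality_dep => i /=.
  by rewrite swpC //; apply: nom_absn.
- move=> a b c d [e|[op h]] /=; first by rewrite swapn_conj.
  congr inr; congr existT; apply: functional_extensionality_dep => i /=.
  by rewrite swp_conj //; apply: nom_absn.
- case=> [a|[op h]]; last by eexists; apply: supports_Fa.
  exists [:: a] => b c; rewrite !inE => hb hc /=; by rewrite swapnO // eq_sym.
Qed.

Lemma supp_F_inl (Op : Type) (ar : Op -> seq nat) (X : pset) (HX : nom X) a d :
  @in_supp (F ar X) (inl a) d <-> d = a.
Proof.
split.
- move=> H; have : d \in [:: a].
    apply: H => b c; rewrite !inE => hb hc /=; by rewrite swapnO // eq_sym.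
  by rewrite inE => /eqP.
- move=> -> l Hl; case Hal: (a \in l) => //; exfalso.
  set e := fresh (a :: l); have := fresh_notin (a :: l); rewrite -/e inE negb_or => /andP [ea el].
  have := Hl a e; rewrite Hal el /= swapnL => /(_ isT isT) [] /eqP; by rewrite (negbTE ea).
Qed.

Lemma supp_F_inr (Op : Type) (ar : Op -> seq nat) (X : pset) (HX : nom X) op h d :
  @in_supp (F ar X) (inr (existT _ op h)) d <->
  exists i, d \in val (h i).1 \/ in_supp (h i).2 d.
Proof.
split.
- move=> H; have /mem_flat [i] := H _ (@supports_F _ _ _ HX op h).
  rewrite mem_cat => /orP [hi|hi]; exists i; [by left|right]; exact/(memS HX).
- case=> i hi l Hl; case Hdl: (d \in l) => //; exfalso.
  set e := fresh (d :: l ++ val (h i).1 ++ Sl (h i).2).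
  have := fresh_notin (d :: l ++ val (h i).1 ++ Sl (h i).2).
  rewrite -/e inE !mem_cat !negb_or => /and4P [ed el et ex].
  have := Hl d e; rewrite Hdl el => /(_ isT isT) E0; have E := existT_inj (inr_inj E0).
  have Ei := f_equal (fun g => g i) E; simpl in Ei.
  have Et := f_equal fst Ei; have Ex := f_equal snd Ei; simpl in Et, Ex.
  case: hi => [dt|dx].
  + move/negP: et; apply; rewrite -Et /= mem_map_swapn swapnR //.
  + apply: (fix_fresh HX Ex) dx; by move/(memS HX); apply/negP.
Qed.

Lemma supp_Fa_inl (Op : Type) (ar : Op -> seq nat) (X : pset) (HX : nom X) a d :
  @in_supp (Fa ar X) (inl a) d <-> d = a.
Proof.
split.
- move=> H; have : d \in [:: a].
    apply: H => b c; rewrite !inE => hb hc /=; by rewrite swapnO // eq_sym.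
  by rewrite inE => /eqP.
- move=> -> l Hl; case Hal: (a \in l) => //; exfalso.
  set e := fresh (a :: l); have := fresh_notin (a :: l); rewrite -/e inE negb_or => /andP [ea el].
  have := Hl a e; rewrite Hal el /= swapnL => /(_ isT isT) [] /eqP; by rewrite (negbTE ea).
Qed.

Lemma supp_Fa_inr (Op : Type) (ar : Op -> seq nat) (X : pset) (HX : nom X) op h d :
  @in_supp (Fa ar X) (inr (existT _ op h)) d <-> exists i, in_supp (h i) d.
Proof.
split.
- move=> H; have /mem_flat [i] := H _ (@supports_Fa _ _ _ HX op h).
  by move/(memS (nom_absn _ HX)) => hi; exists i.
- case=> i hi l Hl; case Hdl: (d \in l) => //; exfalso.
  have HXi := nom_absn (nth 0 (ar op) i) HX.
  set e := fresh (d :: l ++ Sl (h i)).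
  have := fresh_notin (d :: l ++ Sl (h i)).
  rewrite -/e inE !mem_cat !negb_or => /and3P [ed el ex].
  have := Hl d e; rewrite Hdl el => /(_ isT isT) E0; have E := existT_inj (inr_inj E0).
  have Ex := f_equal (fun g => g i) E; simpl in Ex.
  apply: (fix_fresh HXi Ex) hi; by move/(memS HXi); apply/negP.
Qed.

Lemma eqv_Fmap (Op : Type) (ar : Op -> seq nat) (X Y : pset) (f : X -> Y) :
  eqv f -> eqv (@Fmap Op ar X Y f).
Proof.
move=> Hf b c [a|[op h]] //=; congr inr; congr existT.
by apply: functional_extensionality_dep => i /=; rewrite Hf.
Qed.

Lemma eqv_Famap (Op : Type) (ar : Op -> seq nat) (X Y : pset) (HX : nom X) (HY : nom Y)
  (f : X -> Y) : eqv f -> eqv (@Famap Op ar X Y f).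
Proof.
move=> Hf b c [a|[op h]] //=; congr inr; congr existT.
by apply: functional_extensionality_dep => i /=; rewrite eqv_absn_map.
Qed.

Lemma eqv_q (Op : Type) (ar : Op -> seq nat) (X : pset) (HX : nom X) :
  eqv (@q Op ar X).
Proof.
move=> b c [a|[op h]] //=; congr inr; congr existT.
by apply: functional_extensionality_dep => i /=; rewrite swp_qn.
Qed.

Lemma nom_Fn (Op : Type) (ar : Op -> seq nat) n : nom (Fn ar n).
Proof. elim: n => [|n IH] /=; [exact: nom_unit | exact: nom_F]. Qed.
Lemma nom_Fan (Op : Type) (ar : Op -> seq nat) n : nom (Fan ar n).
Proof. elim: n => [|n IH] /=; [exact: nom_unit | exact: nom_Fa]. Qed.

Lemma eqv_Fbang (Op : Type) (ar : Op -> seq nat) n : eqv (Fbang ar n).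
Proof. elim: n => [|n IH] //=; exact: eqv_Fmap. Qed.
Lemma eqv_Fabang (Op : Type) (ar : Op -> seq nat) n : eqv (Fabang ar n).
Proof. elim: n => [|n IH] //=; exact: (eqv_Famap (nom_Fan ar n.+1) (nom_Fan ar n) IH). Qed.
Lemma eqv_amap (Op : Type) (ar : Op -> seq nat) n : eqv (amap ar n).
Proof.
elim: n => [|n IH] //= b c u.
by rewrite (eqv_Fmap IH) (eqv_q (nom_Fan ar n)).
Qed.


Fixpoint bl (Op : Type) (ar : Op -> seq nat) (n : nat) : Fn ar n -> seq nat :=
  match n return Fn ar n -> seq nat with
  | 0 => fun _ => [::]
  | m.+1 => fun u => match u with
      | inl _ => [::]
      | inr (existT op h) =>
          flatten [seq val (h i).1 ++ @bl Op ar m (h i).2 | i <- enum 'I_(size (ar op))]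
      end
  end.

Lemma amap_inr (Op : Type) (ar : Op -> seq nat) n op h :
  amap ar n.+1 (inr (existT _ op h)) =
  inr (existT _ op (fun i => qn (h i).1 (amap ar n (h i).2))).
Proof. by []. Qed.

Lemma supp_raw (Op : Type) (ar : Op -> seq nat) n (w : Fn ar n) d :
  in_supp w d <-> in_supp (amap ar n w) d \/ d \in bl w.
Proof.
elim: n w => [|n IH] w /=.
  by split; [left|case].
case: w => [a|[op h]].
  rewrite (supp_F_inl ar (nom_Fn ar n)) (supp_Fa_inl ar (nom_Fan ar n)) in_nil.
  by split; [left|case].
rewrite (supp_F_inr (nom_Fn ar n)) (supp_Fa_inr (nom_Fan ar n)).
split.
- case=> i [dt|dx].
    by right; apply/mem_flat; exists i; rewrite mem_cat dt.
  case/IH: dx => [dx|dx]; last by right; apply/mem_flat; exists i; rewrite mem_cat dx orbT.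
  case dt: (d \in val (h i).1); first by right; apply/mem_flat; exists i; rewrite mem_cat dt.
  left; exists i; apply/(supp_qn (nom_Fan ar n)); by rewrite dt.
- case=> [[i /(supp_qn (nom_Fan ar n)) [_ hi]]|/mem_flat [i]].
    by exists i; right; apply/IH; left.
  rewrite mem_cat => /orP [dt|dx]; exists i; first by left.
  by right; apply/IH; right.
Qed.

Definition FB (Op : Type) (ar : Op -> seq nat) n (w : Fn ar n) :=
  uniq (bl w) /\ forall a, a \in bl w -> ~ in_supp (amap ar n w) a.

Lemma supp_size_le (Op : Type) (ar : Op -> seq nat) n (w : Fn ar n) k :
  supp_size w k -> k <= size (Sl (amap ar n w) ++ bl w).
Proof.
case=> l [ul Hl <-]; apply: uniq_leq_size => // a /Hl /supp_raw [h|h].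
  by rewrite mem_cat; apply/orP; left; apply/(memS (nom_Fan ar n)).
by rewrite mem_cat h orbT.
Qed.

Lemma FB_supp_size (Op : Type) (ar : Op -> seq nat) n (w : Fn ar n) :
  FB w -> supp_size w (size (Sl (amap ar n w) ++ bl w)).
Proof.
case=> ub Hb; exists (Sl (amap ar n w) ++ bl w); split => //.
- rewrite cat_uniq ub S_uniq ?andbT; last exact: nom_Fan.
  apply/hasPn => a /Hb h; apply/negP => /(memS (nom_Fan ar n)).
  exact: h.
- move=> a; rewrite mem_cat supp_raw; split.
  + by case/orP => [/(memS (nom_Fan ar n))|]; [left|right].
  + case => [/(memS (nom_Fan ar n)) -> //|->]; by rewrite orbT.
Qed.

Lemma bl_swp (Op : Type) (ar : Op -> seq nat) n (w : Fn ar n) b c :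
  bl (swp (Fn ar n) b c w) = map (swapn b c) (bl w).
Proof.
elim: n w => [|n IH] w //=; case: w => [a|[op h]] //=.
rewrite map_flatten -map_comp; congr flatten; apply: eq_map => i /=.
by rewrite IH map_cat.
Qed.

Definition swps (X : pset) (p : seq (nat * nat)) (x : X) : X :=
  foldr (fun bc y => swp X bc.1 bc.2 y) x p.

Lemma swps_eqv (X Y : pset) (f : X -> Y) p x : eqv f -> f (swps p x) = swps p (f x).
Proof. move=> Hf; elim: p => //= [[b c] p IH] /=; by rewrite Hf IH. Qed.

Lemma size_bl_swps (Op : Type) (ar : Op -> seq nat) n (w : Fn ar n) p :
  size (bl (swps p w)) = size (bl w).
Proof. elim: p => //= [[b c] p IH]; by rewrite bl_swp size_map. Qed.

Lemma swps_cat (X : pset) p1 p2 (x : X) : swps (p1 ++ p2) x = swps p1 (swps p2 x).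
Proof. by rewrite /swps foldr_cat. Qed.

Lemma qn_inv (X : pset) (HX : nom X) k (t t' : k.-tuple nat) (y y' : X) :
  qn t y = qn t' y' -> exists p, y' = swps p y.
Proof.
elim: k t t' y y' => [|k IH] t t' y y'.
  by move=> /= ->; exists [::].
case/tupleP: t => h t; case/tupleP: t' => h' t'; rewrite !qnS !theadE.
have -> : behead_tuple [tuple of h :: t] = t by apply: val_inj.
have -> : behead_tuple [tuple of h' :: t'] = t' by apply: val_inj.
have HXk := nom_absn k HX.
move/(abs_eq HXk) => HR.
have [c [hl hx hy]] := fresh4 HXk (qn t y) (qn t' y') [:: h; h'].
move: hl; rewrite !inE !negb_or => /andP [ch ch'].
have := R_all HXk HR ch ch' hx hy; rewrite !swp_qn // => /IH [p Hp].
exists ((h', c) :: p ++ [:: (h, c)]); rewrite /= swps_cat /= -Hp swpK //.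
Qed.

Lemma size_flat_eq (I : Type) (f g : I -> seq nat) (s : seq I) :
  (forall i, size (f i) = size (g i)) ->
  size (flatten (map f s)) = size (flatten (map g s)).
Proof. move=> H; elim: s => //= i s IH; by rewrite !size_cat H IH. Qed.

Lemma bl_size_inv (Op : Type) (ar : Op -> seq nat) n (w w' : Fn ar n) :
  amap ar n w = amap ar n w' -> size (bl w) = size (bl w').
Proof.
elim: n w w' => [|n IH] w w' //=.
case: w => [a|[op h]]; case: w' => [a'|[op' h']] //=.
move=> E0; have E := inr_inj E0; clear E0; have Eop := f_equal (@projT1 _ _) E; simpl in Eop; subst op'.
have {}E := existT_inj E.
apply: size_flat_eq => i; rewrite !size_cat !size_tuple; congr addn.
have Ei := f_equal (fun g => g i) E; simpl in Ei.
case: (qn_inv (nom_Fan ar n) Ei) => p Hp.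
by rewrite -(size_bl_swps _ p); apply: IH; rewrite Hp swps_eqv //; apply: eqv_amap.
Qed.

Lemma uniq_flat_map (I : eqType) (g : I -> seq nat) (s : seq I) : uniq s ->
  uniq (flatten (map g s)) <->
  (forall i, i \in s -> uniq (g i)) /\
  (forall i j a, i \in s -> j \in s -> i != j -> a \in g i -> a \notin g j).
Proof.
elim: s => [|i s IH] /=; first by split => // _; split.
case/andP => nis us; rewrite cat_uniq; split.
- case/and3P => ui /hasPn hn /(IH us) [Hu Hd]; split.
    by move=> j; rewrite inE => /orP [/eqP ->|/Hu].
  move=> j1 j2 a; rewrite !inE => /orP [/eqP ->|j1s] /orP [/eqP ->|j2s] //.
  + by rewrite eqxx.
  + move=> _ ai; apply/negP => aj.
    have : a \in flatten [seq g i | i <- s] by apply/flatten_mapP; exists j2.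
    by move/hn; rewrite ai.
  + move=> _ aj; apply/negP => ai.
    have : a \in flatten [seq g i | i <- s] by apply/flatten_mapP; exists j1.
    by move/hn; rewrite ai.
  + exact: Hd.
- case=> Hu Hd; rewrite Hu ?inE ?eqxx //=; apply/andP; split; last first.
    apply/(IH us); split; first by move=> j js; apply: Hu; rewrite inE js orbT.
    by move=> j1 j2 a j1s j2s; apply: Hd; rewrite inE ?j1s ?j2s orbT.
  apply/hasPn => a /flatten_mapP [j js aj].
  have ij : j != i by apply/negP => /eqP E; move: nis; rewrite -E js.
  exact: (Hd j i a (@mem_behead _ (i :: s) j js) (mem_head _ _) ij aj).
Qed.

Lemma uniq_flat (K : nat) (g : 'I_K -> seq nat) :
  uniq (flatten [seq g i | i <- enum 'I_K]) <->
  (forall i, uniq (g i)) /\ (forall i j a, i != j -> a \in g i -> a \notin g j).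
Proof.
rewrite uniq_flat_map ?enum_uniq //; split.
- case=> H1 H2; split; first by move=> i; apply: H1; rewrite mem_enum.
  by move=> i j a; apply: H2; rewrite mem_enum.
- case=> H1 H2; split; first by move=> i _; apply: H1.
  by move=> i j a _ _; apply: H2.
Qed.

Lemma seq_choice (K : nat) (T : 'I_K -> Type) (Q : forall i, T i -> Prop)
  (nm : forall i, T i -> seq nat) :
  (forall i (L : seq nat), exists w, Q i w /\ forall a, a \in nm i w -> a \notin L) ->
  forall L : seq nat, exists ws : forall i, T i,
    [/\ forall i, Q i (ws i),
        forall i a, a \in nm i (ws i) -> a \notin L &
        forall i j a, i != j -> a \in nm i (ws i) -> a \notin nm j (ws j)].
Proof.
move=> H L.
pose ch i L := proj1_sig (constructive_indefinite_description _ (H i L)).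
have chP : forall i L, Q i (ch i L) /\ forall a, a \in nm i (ch i L) -> a \notin L.
  by move=> i L'; rewrite /ch; case: constructive_indefinite_description.
pose acc := fix acc (m : nat) : seq nat :=
  match m with
  | 0 => L
  | m'.+1 => acc m' ++ (match @insub _ (fun x => x < K) _ m' with
                        | Some i => nm i (ch i (acc m'))
                        | None => [::] end)
  end.
have acc_mono : forall m m', m <= m' -> {subset acc m <= acc m'}.
  move=> m m' /subnK <-; elim: (m' - m) => //= d IHd a /IHd.
  by rewrite mem_cat => ->.
exists (fun i => ch i (acc i)); split.
- by move=> i; case: (chP i (acc i)).
- move=> i a /(proj2 (chP i (acc i))) h; apply/negP => aL; move/negP: h; apply.
  by apply: (acc_mono 0) => //.
- have key : forall (i j : 'I_K) a, j < i -> a \in nm j (ch j (acc j)) -> a \notin nm i (ch i (acc i)).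
    move=> i j a ji aj; apply/negP => ai.
    move: (proj2 (chP i (acc i)) a ai); apply/negP; rewrite negbK.
    apply: (acc_mono j.+1) => //.
    by rewrite /= valK mem_cat aj orbT.
  move=> i j a; case: (ltngtP i j) => [ij|ji|/val_inj ->]; last by rewrite eqxx.
  + move=> _; exact: key.
  + move=> _ ai; apply/negP => aj; move: (key i j a ji aj); by rewrite ai.
Qed.

Lemma fresh_lt (L : seq nat) a : a \in L -> a < fresh L.
Proof.
rewrite /fresh ltnS; elim: L => //= b L IH; rewrite inE => /orP [/eqP ->|/IH h].
  exact: leq_maxl.
exact: leq_trans h (leq_maxr _ _).
Qed.

Definition ftup (L : seq nat) (k : nat) : k.-tuple nat :=
  Tuple (introT eqP (size_iota (fresh L) k)).

Lemma ftupP (L : seq nat) k : uniq (ftup L k) /\ forall a, a \in ftup L k -> a \notin L.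
Proof.
split; first exact: iota_uniq.
move=> a; rewrite mem_iota => /andP [h _]; apply/negP => /fresh_lt.
by rewrite ltnNge h.
Qed.


Lemma rename (X : pset) (HX : nom X) k (t s : k.-tuple nat) (y : X) :
  uniq s -> (forall j, j \in s -> j \notin t) ->
  (forall j, j \in s -> ~ in_supp (qn t y) j) ->
  exists p, qn t y = qn s (swps p y).
Proof.
elim: k t s y => [|k IH] t s y.
  by move=> _ _ _; exists [::].
case/tupleP: t => h t; case/tupleP: s => g s; rewrite !qnS !theadE.
have -> : behead_tuple [tuple of h :: t] = t by apply: val_inj.
have HXk := nom_absn k HX.
rewrite [uniq _]/= => /andP [gs us] Hst Hsupp.
have gh : g != h.
  by apply/negP => /eqP E; move: (Hst g (mem_head _ _)); rewrite E mem_head.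
have gY : ~ in_supp (qn t y) g.
  move=> H; apply: (Hsupp g (mem_head _ _)); apply/(supp_abs HXk); by split.
rewrite (abs_rename HXk h gY) swp_qn //.
have [p Hp] : exists p, qn (map_tuple (swapn h g) t) (swp X h g y) =
                   qn s (swps p (swp X h g y)).
  apply: IH => // j js.
  - have jg : j != g by apply/negP => /eqP E; move: gs; rewrite -E js.
    have jt : j \notin h :: t by apply: Hst; rewrite inE js orbT.
    move: jt; rewrite inE negb_or => /andP [jh jt].
    by rewrite /= mem_map_swapn swapnO.
  - have jg : j != g by apply/negP => /eqP E; move: gs; rewrite -E js.
    have jt : j \notin h :: t by apply: Hst; rewrite inE js orbT.
    move: jt; rewrite inE negb_or => /andP [jh jt].
    rewrite -swp_qn // in_supp_swp // swapnO // => H.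
    apply: (Hsupp j); first by rewrite inE js orbT.
    by apply/(supp_abs HXk); split.
exists (p ++ [:: (h, g)]); rewrite qnS theadE.
have -> : behead_tuple [tuple of g :: s] = s by apply: val_inj.
by rewrite Hp swps_cat.
Qed.

Lemma abs_rename' (X : pset) (HX : nom X) a b (x : X) :
  b = a \/ ~ in_supp x b -> abs_mk a x = abs_mk b (swp X a b x).
Proof. case=> [->|h]; [by rewrite swp_id | exact: abs_rename]. Qed.

Lemma abslift (X Y : pset) (HX : nom X) (HY : nom Y) (f : X -> Y) (Hf : eqv f) k
  (t : k.-tuple nat) (K : absn k X) (y0 : Y) :
  uniq t -> (forall j, j \in t -> ~ in_supp K j) -> absn_map f K = qn t y0 ->
  exists y, K = qn t y /\ f y = y0.
Proof.
elim: k t K y0 => [|k IH] t K y0.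
  by move=> _ _ /= E; exists K.
have HXk := nom_absn k HX; have HYk := nom_absn k HY.
case/tupleP: t => h t; rewrite !qnS !theadE.
have -> : behead_tuple [tuple of h :: t] = t by apply: val_inj.
rewrite [uniq _]/= => /andP [ht ut].
elim/abs_ind: K => a Y0 Hsupp.
have hK := Hsupp h (mem_head _ _).
have Hren : h = a \/ ~ in_supp Y0 h.
  case: (eqVneq h a) => [->|ha]; [by left|right] => H; apply: hK; apply/(supp_abs HXk); by split.
rewrite (abs_rename' HXk Hren) /=.
rewrite abs_map_mk //; last exact: eqv_absn_map.
move/(abs_inj (nom_absn k HY)) => E.
have [y [Ey Efy]] : exists y, swp (absn k X) a h Y0 = qn t y /\ f y = y0.
  apply: IH => // j jt Hj.
  apply: (Hsupp j); first by rewrite inE jt orbT.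
  rewrite (abs_rename' HXk Hren); apply/(supp_abs HXk); split => //.
  by apply/negP => /eqP E'; move: ht; rewrite -E' jt.
exists y; rewrite theadE Ey; split => //; congr abs_mk; congr qn; by apply: val_inj.
Qed.

Lemma absn_unit_sub k (x y : absn k unitP) : x = y.
Proof.
elim: k x y => [|k IH] x y; first by case: x; case: y.
have HU := nom_absn k nom_unit.
elim/abs_ind: x => a x; elim/abs_ind: y => b y.
rewrite (IH x y); apply/(abs_eq HU); apply: (R_intro HU) => c _ _ _ _; exact: IH.
Qed.

Lemma comm_sq (Op : Type) (ar : Op -> seq nat) n (z : Fn ar n.+1) :
  amap ar n (Fbang ar n z) = Fabang ar n (amap ar n.+1 z).
Proof.
elim: n z => [|n IH] z //.
case: z => [a|[op h]] //=.
congr inr; congr existT; apply: functional_extensionality_dep => i /=.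
by rewrite (absn_map_qn (nom_Fan ar n.+1) (nom_Fan ar n) (@eqv_Fabang _ ar n)) IH.
Qed.


Lemma supp_comp_Fa (Op : Type) (ar : Op -> seq nat) (X : pset) (HX : nom X) op h i d :
  in_supp (h i) d -> @in_supp (Fa ar X) (inr (existT _ op h)) d.
Proof. by move=> H; apply/(supp_Fa_inr HX); exists i. Qed.

Lemma refresh (Op : Type) (ar : Op -> seq nat) n (u : Fn ar n) (L : seq nat) :
  exists w : Fn ar n, [/\ amap ar n w = amap ar n u, FB w, size (bl w) = size (bl u)
                       & forall a, a \in bl w -> a \notin L].
Proof.
elim: n u L => [|n IH] u L.
  by exists u; split => //; split.
case: u => [a|[op h]].
  by exists (inl a); split => //; split.
set L0 := L ++ Sl (amap ar n.+1 (inr (existT _ op h))).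
have HFa := nom_Fan ar n.
pose T i := ((nth 0 (ar op) i).-tuple nat * Fn ar n)%type.
pose Q (i : 'I_(size (ar op))) (sw : T i) :=
  [/\ uniq (val sw.1), qn (h i).1 (amap ar n (h i).2) = qn sw.1 (amap ar n sw.2), FB sw.2,
      size (bl sw.2) = size (bl (h i).2) & forall a, a \in val sw.1 -> a \notin bl sw.2].
pose nm (i : 'I_(size (ar op))) (sw : T i) := val sw.1 ++ bl sw.2.
have Hyp : forall (i : 'I_(size (ar op))) (L' : seq nat), exists sw : T i, Q i sw /\ forall a, a \in nm i sw -> a \notin L'.
  move=> i L'.
  set s := ftup (L' ++ L0 ++ val (h i).1) (nth 0 (ar op) i).
  have [us Hs] := ftupP (L' ++ L0 ++ val (h i).1) (nth 0 (ar op) i).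
  have [p Hp] : exists p, qn (h i).1 (amap ar n (h i).2) = qn s (swps p (amap ar n (h i).2)).
    apply: rename => // j /Hs; rewrite !mem_cat !negb_or => /and3P [_ jL0 jt] //.
    move=> Hj; case/andP: jL0 => _ /negP; apply.
    apply/(memS (nom_Fan ar n.+1)); exact: (@supp_comp_Fa _ ar (Fan ar n) HFa op (fun i => qn (h i).1 (amap ar n (h i).2)) i j Hj).
  have [w' [Ew' FBw' Sw' Aw']] := IH (swps p (h i).2) (L' ++ L0 ++ val s).
  exists (s, w'); split; first split => //=.
  - by rewrite Hp Ew'; congr qn; symmetry; apply: swps_eqv; exact: eqv_amap.
  - by rewrite Sw' size_bl_swps.
  - by move=> a as_; apply/negP => /Aw'; rewrite !mem_cat as_ !orbT.
  - move=> a; rewrite /nm mem_cat => /orP [/Hs|/Aw']; rewrite !mem_cat !negb_or.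
      by case/and3P.
    by case/and3P.
have [ws [HQ HL Hd]] := seq_choice Hyp L0.
exists (inr (existT _ op ws)).
have Eam : amap ar n.+1 (inr (existT _ op ws)) = amap ar n.+1 (inr (existT _ op h)).
  rewrite !amap_inr; congr inr; congr existT.
  by apply: functional_extensionality_dep => i; case: (HQ i) => _ ->.
split => //.
- split.
  + rewrite /=; apply/uniq_flat; split; last exact: Hd.
    move=> i; case: (HQ i) => u1 _ [u2 _] _ u3; rewrite cat_uniq u1 u2 andbT /=.
    apply/hasPn => a ha; apply/negP => h1; move: (u3 a h1); by rewrite ha.
  + move=> a /mem_flat [i] /(HL i a) aL0; rewrite Eam => Ha.
    move: aL0; rewrite mem_cat negb_or => /andP [_ /negP]; apply.
    exact/(memS (nom_Fan ar n.+1)).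
- rewrite /=; apply: size_flat_eq => i; rewrite !size_cat !size_tuple.
  by case: (HQ i) => _ _ _ ->.
- move=> a /mem_flat [i] /(HL i a); rewrite mem_cat negb_or; by case/andP.
Qed.


Lemma safe_FB (Op : Type) (ar : Op -> seq nat) n (u : Fn ar n) :
  safe (amap ar n) u -> FB u.
Proof.
case=> k [Hk Hmax].
have [w [Ew FBw Sw _]] := refresh u [::].
have h1 := Hmax w _ Ew (FB_supp_size FBw).
have h2 := supp_size_le Hk.
rewrite Ew size_cat Sw -size_cat in h1.
case: Hk => l [ul Hl Hsz].
have HU : uniq (Sl (amap ar n u) ++ bl u).
  apply: (leq_size_uniq ul).
  - move=> a /Hl /supp_raw [h|h]; rewrite mem_cat; apply/orP; [left|by right].
    exact/(memS (nom_Fan ar n)).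
  - by rewrite Hsz.
move: HU; rewrite cat_uniq => /and3P [_ /hasPn Hn ub]; split => // a ab Ha.
move/negP: (Hn a ab); apply; exact/(memS (nom_Fan ar n)).
Qed.

Lemma FB_safe (Op : Type) (ar : Op -> seq nat) n (z : Fn ar n) :
  FB z -> safe (amap ar n) z.
Proof.
move=> Hz; exists (size (Sl (amap ar n z) ++ bl z)); split; first exact: FB_supp_size.
move=> v k' Ev Hv; have := supp_size_le Hv.
by rewrite Ev !size_cat (bl_size_inv Ev).
Qed.

Lemma main0 (Op : Type) (ar : Op -> seq nat) (u : Fn ar 0) (v : Fan ar 1) (L : seq nat) :
  exists z : Fn ar 1, [/\ Fbang ar 0 z = u, amap ar 1 z = v, FB z &
                        forall a, a \in bl z -> a \in L -> a \in bl u].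
Proof.
case: v => [a|[op k]].
  exists (inl a); split => //; try (by case: u); by split.
pose T i := (nth 0 (ar op) i).-tuple nat.
have Hyp : forall (i : 'I_(size (ar op))) (L' : seq nat),
    exists s : T i, uniq (val s) /\ forall a, a \in val s -> a \notin L'.
  move=> i L'; exists (ftup L' _); exact: ftupP.
have [ws [HQ HL Hd]] := seq_choice Hyp (L ++ Sl (inr (existT _ op k) : Fan ar 1)).
pose z : Fn ar 1 := inr (@existT Op (fun o => forall i : 'I_(size (ar o)),
     ((nth 0 (ar o) i).-tuple nat * car unitP)%type) op (fun i => (ws i, tt))).
have Eam : amap ar 1 z = inr (existT _ op k).
  rewrite amap_inr; congr inr; congr existT.
  apply: functional_extensionality_dep => i; exact: absn_unit_sub.
exists z; split => //.
- by case: u.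
- split.
  + rewrite /=; apply/uniq_flat; split.
      by move=> i; rewrite cats0; apply: HQ.
    by move=> i j a; rewrite !cats0; apply: Hd.
  + move=> a /mem_flat [i]; rewrite cats0 => /(HL i a); rewrite Eam mem_cat negb_or.
    case/andP => _ /negP H Ha; apply: H; exact/(memS (nom_Fan ar 1)).
- move=> a /mem_flat [i]; rewrite cats0 => /(HL i a); rewrite mem_cat negb_or.
  by case/andP => /negbTE ->.
Qed.

Definition MainP (Op : Type) (ar : Op -> seq nat) n :=
  forall (u : Fn ar n) (v : Fan ar n.+1), FB u -> amap ar n u = Fabang ar n v ->
  (forall a, a \in bl u -> ~ in_supp v a) -> forall L : seq nat,
  exists z : Fn ar n.+1, [/\ Fbang ar n z = u, amap ar n.+1 z = v, FB z &
                           forall a, a \in bl z -> a \in L -> a \in bl u].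

Lemma mainS (Op : Type) (ar : Op -> seq nat) m : MainP ar m -> MainP ar m.+1.
Proof.
move=> IH u v [ub uS] E Hv L.
case: u E ub uS Hv => [a|[op h]] E ub uS Hv.
  case: v E Hv => [b|[op' k]] E Hv; move: E => /= E; last by [].
  case: E => <-; exists (inl a); split => //; by split.
case: v E Hv => [b|[op' k]] E Hv; move: E => /= E0; first by [].
have E1 := inr_inj E0; have Eop := f_equal (@projT1 _ _) E1; simpl in Eop; subst op'.
have E2 := existT_inj E1.
have Ei : forall i, qn (h i).1 (amap ar m (h i).2) = absn_map (Fabang ar m) (k i).
  by move=> i; exact: (f_equal (fun g => g i) E2).
set BU := bl (inr (existT _ op h) : Fn ar m.+1) in ub uS Hv.
have [Hui Hdj] : (forall i, uniq (val (h i).1 ++ bl (h i).2)) /\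
   (forall i j a, i != j -> a \in val (h i).1 ++ bl (h i).2 -> a \notin val (h j).1 ++ bl (h j).2).
  by apply/uniq_flat.
have inbl : forall i a, a \in val (h i).1 ++ bl (h i).2 -> a \in BU.
  by move=> i a H; apply/mem_flat; exists i.
have HFm := nom_Fan ar m; have HFm1 := nom_Fan ar m.+1.
have compv : forall i a, in_supp (k i) a -> in_supp (inr (existT _ op k) : Fan ar m.+2) a.
  by move=> i a H; apply/(supp_Fa_inr HFm1); exists i.
have Y : forall i, exists y, k i = qn (h i).1 y /\ Fabang ar m y = amap ar m (h i).2.
  move=> i; apply: (abslift HFm1 HFm (@eqv_Fabang _ ar m)).
  - by move: (Hui i); rewrite cat_uniq => /andP [].
  - move=> j jt Hj; apply: (Hv j); first by apply: (inbl i); rewrite mem_cat jt.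
    exact: compv Hj.
  - by rewrite -Ei.
pose y i := proj1_sig (constructive_indefinite_description _ (Y i)).
have yP : forall i, k i = qn (h i).1 (y i) /\ Fabang ar m (y i) = amap ar m (h i).2.
  by move=> i; rewrite /y; case: constructive_indefinite_description.
set L0 := L ++ Sl (inr (existT _ op k) : Fan ar m.+2) ++ BU.
pose Q (i : 'I_(size (ar op))) (w : Fn ar m.+1) :=
  [/\ Fbang ar m w = (h i).2, amap ar m.+1 w = y i, FB w &
      forall a, a \in bl w -> a \in L0 -> a \in bl (h i).2].
pose nm (i : 'I_(size (ar op))) (w : Fn ar m.+1) := [seq a <- bl w | a \notin BU].
have Hyp : forall (i : 'I_(size (ar op))) (L' : seq nat),
    exists w, Q i w /\ forall a, a \in nm i w -> a \notin L'.
  move=> i L'.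
  have Hdis : forall a, a \in bl (h i).2 -> a \notin val (h i).1.
    move=> a ab; apply/negP => at_; move: (Hui i); rewrite cat_uniq => /and3P [_ /hasPn H _].
    by move: (H a ab); rewrite at_.
  have FBx : FB (h i).2.
    split; first by move: (Hui i); rewrite cat_uniq => /and3P [].
    move=> a ab Ha; apply: (uS a); first by apply: (inbl i); rewrite mem_cat ab orbT.
    apply/(supp_Fa_inr HFm); exists i; apply/(supp_qn HFm); split => //; exact: Hdis.
  have Hvx : forall a, a \in bl (h i).2 -> ~ in_supp (y i) a.
    move=> a ab Ha; apply: (Hv a); first by apply: (inbl i); rewrite mem_cat ab orbT.
    apply: (compv i); rewrite (proj1 (yP i)); apply/(supp_qn HFm1); split => //; exact: Hdis.
  have [w [w1 w2 w3 w4]] := IH (h i).2 (y i) FBx (esym (proj2 (yP i))) Hvx (L' ++ L0).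
  exists w; split.
    split => // a aw aL0; apply: w4 => //; by rewrite mem_cat aL0 orbT.
  move=> a; rewrite mem_filter => /andP [aB aw]; apply/negP => aL'.
  have : a \in bl (h i).2 by apply: w4 => //; rewrite mem_cat aL'.
  move=> ab; move/negP: aB; apply; apply: (inbl i); by rewrite mem_cat ab orbT.
have [ws [HQ _ Hd]] := seq_choice Hyp [::].
pose z : Fn ar m.+2 := inr (@existT Op (fun o => forall i : 'I_(size (ar o)),
     ((nth 0 (ar o) i).-tuple nat * car (Fn ar m.+1))%type) op (fun i => ((h i).1, ws i))).
have key : forall i a, a \in val (h i).1 ++ bl (ws i) ->
    (a \in BU /\ a \in val (h i).1 ++ bl (h i).2) \/ (a \notin BU /\ a \in nm i (ws i)).
  move=> i a; rewrite mem_cat => /orP [at_|aw].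
    by left; split; [apply: (inbl i)|]; rewrite mem_cat at_.
  case aB: (a \in BU).
    left; split => //; rewrite mem_cat; apply/orP; right.
    case: (HQ i) => _ _ _ ->//; by rewrite /L0 !mem_cat aB !orbT.
  by right; split => //; rewrite mem_filter aB aw.
have Eam : amap ar m.+2 z = inr (existT _ op k).
  rewrite amap_inr; congr inr; congr existT; apply: functional_extensionality_dep => i.
  by case: (HQ i) => _ -> _ _; rewrite -(proj1 (yP i)).
exists z; split => //.
- rewrite /=; congr inr; congr existT; apply: functional_extensionality_dep => i /=.
  case: (HQ i) => -> _ _ _; by case: (h i).
- split.
  + rewrite /=; apply/uniq_flat; split.
    * move=> i; rewrite cat_uniq; apply/and3P; split.
      - by move: (Hui i); rewrite cat_uniq => /and3P [].
      - apply/hasPn => a aw; apply/negP => at_.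
        have ab : a \in bl (h i).2.
          case: (HQ i) => _ _ _ ->//; by rewrite /L0 !mem_cat (inbl i) ?orbT // mem_cat at_.
        move: (Hui i); rewrite cat_uniq => /and3P [_ /hasPn H _].
        by move: (H a ab); rewrite at_.
      - by case: (HQ i) => _ _ [].
    * move=> i j a ij /key [[aB ai]|[aB ai]]; apply/negP => /key [[aB' aj]|[aB' aj]].
      - by move: (Hdj i j a ij ai); rewrite aj.
      - by move/negP: aB'.
      - by move/negP: aB.
      - by move: (Hd i j a ij ai); rewrite aj.
  + move=> a /mem_flat [i] /key [[aB _]|[aB ai]]; rewrite Eam; first exact: Hv.
    move=> Ha; move: ai; rewrite mem_filter aB /= => aw.
    case: (HQ i) => _ _ _ /(_ a aw) H.
    have ab : a \in bl (h i).2.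
      apply: H; rewrite /L0 !mem_cat; apply/orP; right; apply/orP; left.
      exact/(memS (nom_Fan ar m.+2)).
    move/negP: aB; apply; apply: (inbl i); by rewrite mem_cat ab orbT.
- move=> a /mem_flat [i] /key [[aB _]|[aB ai]] aL //.
  move: ai; rewrite mem_filter aB /= => aw.
  case: (HQ i) => _ _ _ /(_ a aw) H.
  apply: (inbl i); rewrite mem_cat H ?orbT //; by rewrite /L0 mem_cat aL.
Qed.

Lemma main_all (Op : Type) (ar : Op -> seq nat) n : MainP ar n.
Proof.
elim: n => [|n IH]; last exact: mainS.
move=> u v _ _ _ L; exact: main0.
Qed.

Theorem proposition5p46 (Op : Type) (ar : Op -> seq nat)
    (Hcount : exists e : Op -> nat, injective e) (n : nat) :
  safe_square (Fbang ar n) (amap ar n) (amap ar n.+1) (Fabang ar n).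
Proof.
split; first by move=> z; exact: comm_sq.
move=> u v Hs E Hbv.
have FBu := safe_FB Hs.
have Hv : forall a, a \in bl u -> ~ in_supp v a.
  move=> a ab; apply: Hbv; first by apply/supp_raw; right.
  exact: (proj2 FBu a ab).
have [z [z1 z2 z3 _]] := @main_all _ ar n u v FBu E Hv [::].
exists z; split => //; exact: FB_safe.
Qed.
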